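(* Let $\Bbbk$ be an algebraically closed field of characteristic zero and let $\pi$ be a pyramid with row lengths $p_1\le\dots\le p_{m+n}$ (set $p_0=0$), with $|i|\in\{0,1\}$ the label of row $i$. For $2\le i\le m+n$ let $s_{i,i-1}$ be the left indentation of row $i-1$ relative to row $i$. Given $a_i^{(r)}\in\Bbbk$ for $1\le i\le m+n$ and $1\le r\le p_i-p_{i-1}$, there exist $b_{i,j}\in\Bbbk$ for $1\le i\le m+n$, $1\le j\le p_i$, such that $$b_{i,s_{i,i-1}+r}=b_{i-1,r}\quad\text{for }1\le r\le p_{i-1},$$ $$e_r\big((-1)^{|i|}b_{i,1},\dots,(-1)^{|i|}b_{i,p_i}\big)=(-1)^{r|i|}a_i^{(r)}\quad\text{for }1\le r\le p_i-p_{i-1},$$ where $e_r$ is the $r$-th elementary symmetric polynomial.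
   Context: A pyramid $\pi$ with row lengths $p_1\le\dots\le p_{m+n}$ is a diagram with rows $1,\dots,m+n$ numbered top to bottom, row $i$ consisting of $p_i$ consecutive boxes, such that every box not in the bottom row lies directly above a box of the row beneath. Each row is labelled ''$+$'' ($|i|=0$) or ''$-$'' ($|i|=1$), with $m$ rows of the first kind and $n$ of the second. The left indentation $s_{i,i-1}$ is the number of boxes of row $i$ lying strictly to the left of the leftmost box of row $i-1$. *)

(* Defs.v *)
From HB Require Import structures.
From mathcomp Require Import all_boot all_order all_algebra.
Set Implicit Arguments. Unset Strict Implicit. Unset Printing Implicit Defensive.
Import Order.TTheory GRing.Theory Num.Theory.
Local Open Scope ring_scope.

Definition elem_sym (R : comRingType) (r p : nat) (x : nat -> R) : R :=
  \sum_(A : {set 'I_p} | #|A| == r) \prod_(j in A) x j.+1.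

(* A pyramid with rows 1..N (top to bottom): row i has p i boxes occupying
   columns l i, l i + 1, ..., l i + p i - 1.  The pyramid condition (every box
   of row i-1 lies directly above a box of row i) reads
   l i <= l (i-1)  and  l (i-1) + p (i-1) <= l i + p i. *)
Definition is_pyramid (N : nat) (p l : nat -> nat) : Prop :=
  (forall i, (1 <= i <= N)%N -> (0 < p i)%N) /\
  (forall i, (2 <= i <= N)%N ->
     (l i <= l i.-1)%N /\ (l i.-1 + p i.-1 <= l i + p i)%N).

Definition indent (l : nat -> nat) (i : nat) : nat := (l i.-1 - l i)%N.

(* Main.v *)
Require Import Defs.
From mathcomp Require Import all_boot all_order all_algebra.
From mathcomp Require Import zify.
Import GRing.Theory.
Set Implicit Arguments. Unset Strict Implicit.
Local Open Scope ring_scope.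

Definition PP (k : comNzRingType) (n : nat) (w : nat -> k) : {poly k} :=
  \prod_(j < n) ((w j.+1)%:P * 'X + 1).

Lemma elem_symE (k : comNzRingType) r n (x : nat -> k) :
  elem_sym r n x = (PP n x)`_r.
Proof.
rewrite /PP bigA_distr coef_sum /elem_sym.
rewrite [RHS](bigID (fun J : {set 'I_n} => #|J| == r)) /=.
rewrite [X in _ = _ + X]big1 ?addr0.
  apply: eq_bigr => J /eqP <-.
  rewrite -big_mkcond /= big_split /= prodr_const -rmorph_prod /= coefCM coefXn.
  by rewrite eqxx mulr1.
move=> J /negbTE HJ.
rewrite -big_mkcond /= big_split /= prodr_const -rmorph_prod /= coefCM coefXn.
by rewrite eq_sym HJ mulr0.
Qed.
Lemma PP_split (k : comNzRingType) a b (w : nat -> k) :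
  PP (a + b) w = PP a w * PP b (fun j => w (a + j)%N).
Proof.
rewrite /PP big_split_ord /=; congr (_ * _); apply: eq_bigr => j _ /=.
by rewrite addnS.
Qed.

Lemma PP_ext (k : comNzRingType) n (f g : nat -> k) :
  (forall j, (1 <= j <= n)%N -> f j = g j) -> PP n f = PP n g.
Proof.
move=> H; rewrite /PP; apply: eq_bigr => j _; rewrite H //.
by apply/andP; split => //; exact: ltn_ord.
Qed.

Lemma PP0 (k : comNzRingType) n (f : nat -> k) : (PP n f)`_0 = 1.
Proof.
rewrite -horner_coef0 /PP horner_prod; apply: big1 => j _.
by rewrite hornerD hornerM hornerC hornerX hornerC mulr0 add0r.
Qed.

Lemma exF (k : comNzRingType) (Q : {poly k}) (t : nat -> k) d : Q`_0 = 1 ->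
  exists F : {poly k}, [/\ (size F <= d.+1)%N, F`_0 = 1 &
     forall r, (1 <= r <= d)%N -> (Q * F)`_r = t r].
Proof.
move=> HQ; elim: d => [|d [F [HS H0 HF]]].
  exists 1; split; first by rewrite size_poly1.
    by rewrite coef1.
  by move=> r; case: r.
set c := t d.+1 - (Q * F)`_d.+1.
exists (F + c *: 'X^(d.+1)); split.
- rewrite (leq_trans (size_polyD _ _)) // geq_max (leq_trans HS) //.
  by rewrite (leq_trans (size_scale_leq _ _)) // size_polyXn.
- by rewrite coefD coefZ coefXn /= mulr0 addr0.
move=> r /andP [H1 H2].
rewrite mulrDr -scalerAr coefD coefZ coefMXn.
case: (ltnP r d.+1) => Hr.
  by rewrite mulr0 addr0 HF // H1.
have -> : r = d.+1 by apply/eqP; rewrite eqn_leq H2 Hr.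
by rewrite subnn HQ mulr1 /c addrC subrK.
Qed.
Lemma PP_zero (k : comNzRingType) n : PP n (fun _ => 0 : k) = 1.
Proof. by rewrite /PP big1 // => j _; rewrite mul0r add0r. Qed.

Lemma factorF (k : closedFieldType) (F : {poly k}) d :
  F`_0 = 1 -> (size F <= d.+1)%N -> exists y : nat -> k, F = PP d y.
Proof.
move=> H0 HS.
have [rs Hrs] := closed_field_poly_normal F.
have F0 : F.[0] = 1 by rewrite horner_coef0.
have Hnz : forall z, z \in rs -> z != 0.
  move=> z zin; apply/eqP => z0; move: F0; rewrite Hrs hornerZ.
  have := root_prod_XsubC rs z; rewrite zin /root => /eqP.
  by rewrite z0 => ->; rewrite mulr0 => /eqP; rewrite eq_sym oner_eq0.
have Hfac : \prod_(z <- rs) ('X - z%:P) =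
   (\prod_(z <- rs) (-z))%:P * \prod_(z <- rs) ((- z^-1)%:P * 'X + 1).
  rewrite rmorph_prod -big_split /=; apply: eq_big_seq => z zin.
  rewrite mulrDr mulr1 mulrA -polyCM mulrNN mulfV ?Hnz // mul1r polyCN.
  by [].
set G := \prod_(z <- rs) ((- z^-1)%:P * 'X + 1).
have G0 : G.[0] = 1.
  rewrite /G horner_prod; apply: big1 => z _.
  by rewrite hornerD hornerM hornerC hornerX hornerC mulr0 add0r.
have FG : F = G.
  have E : F = (lead_coef F * \prod_(z <- rs) (-z))%:P * G.
    by rewrite {1}Hrs Hfac -mul_polyC mulrA -polyCM.
  move: (F0); rewrite {1}E hornerM hornerC G0 mulr1 => C1.
  by rewrite E C1 mul1r.
have Fnz : F != 0 by apply/eqP => F0'; move: H0; rewrite F0' coef0 => /eqP; rewrite eq_sym oner_eq0.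
have Hsz : (size rs <= d)%N.
  have : size F = (size rs).+1.
    rewrite {1}Hrs size_scale ?lead_coef_eq0 // size_prod_XsubC //.
  by move=> E; move: HS; rewrite E.
set s := [seq - z^-1 | z <- rs].
exists (fun j => nth 0 s j.-1).
have -> : d = (size s + (d - size s))%N by rewrite size_map subnKC.
rewrite PP_split [PP (d - size s) _](@PP_ext _ _ _ (fun _ => 0)); last first.
  move=> j /andP [j1 _]; rewrite nth_default //.
  by case: j j1 => // j _; rewrite addnS /= leq_addr.
rewrite PP_zero mulr1 FG /G /PP -(big_map (fun z => - z^-1) xpredT (fun u => u%:P * 'X + 1)).
rewrite -/s (big_nth 0) big_mkord //.
Qed.
Lemma rowL (k : closedFieldType) (v : nat -> k) (c : k) (hc : c * c = 1)
  s q P (hsq : (s + q <= P)%N) (t : nat -> k) :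
  exists w : nat -> k, (forall r, (1 <= r <= q)%N -> w (s + r)%N = v r) /\
   (forall r, (1 <= r <= P - q)%N -> elem_sym r P (fun j => c * w j) = t r).
Proof.
pose e := (P - s - q)%N.
have [F [HS H0 HF]] := exF t (s + e) (PP0 q (fun j => c * v j)).
have [y Hy] := factorF H0 HS.
exists (fun j => if (j <= s)%N then c * y j else if (j <= s + q)%N then v (j - s)%N
         else c * y (j - q)%N).
split.
  move=> r /andP [r1 r2].
  have -> : (s + r <= s)%N = false by lia.
  have -> : (s + r <= s + q)%N = true by lia.
  by rewrite addKn.
move=> r Hr; rewrite elem_symE.
have -> : P = (s + q + e)%N by rewrite /e; lia.
rewrite PP_split PP_split.
rewrite (@PP_ext _ s _ y); last first.
  by move=> j /andP [j1 j2]; rewrite j2 mulrA hc mul1r.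
rewrite (@PP_ext _ q _ (fun j => c * v j)); last first.
  move=> j /andP [j1 j2].
  have -> : (s + j <= s)%N = false by lia.
  have -> : (s + j <= s + q)%N = true by lia.
  by rewrite addKn.
rewrite (@PP_ext _ e _ (fun j => y (s + j)%N)); last first.
  move=> j /andP [j1 j2].
  have -> : (s + q + j <= s)%N = false by lia.
  have -> : (s + q + j <= s + q)%N = false by lia.
  have -> : (s + q + j - q = s + j)%N by lia.
  by rewrite mulrA hc mul1r.
set A := PP s y; set B := PP e _; set Q := PP q _.
have -> : A * Q * B = Q * (A * B) by rewrite [A * Q]mulrC -mulrA.
rewrite /A /B -PP_split -Hy HF //.
rewrite /e; lia.
Qed.
Lemma mainInd (k : closedFieldType)
  (N : nat) (p l : nat -> nat) (lab : nat -> bool)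
  (hpyr : is_pyramid N p l) (hp0 : p 0%N = 0%N)
  (a : nat -> nat -> k) n : (n <= N)%N ->
  exists b : nat -> nat -> k,
    (forall i, (2 <= i <= n)%N -> forall r, (1 <= r <= p i.-1)%N ->
        b i (indent l i + r)%N = b i.-1 r) /\
    (forall i, (1 <= i <= n)%N -> forall r, (1 <= r <= p i - p i.-1)%N ->
        elem_sym r (p i) (fun j => (-1) ^+ lab i * b i j)
        = (-1) ^+ (r * lab i) * a i r).
Proof.
elim: n => [_|n IH HnN].
  exists (fun _ _ => 0); split => i Hi; exfalso; lia.
have [b [Hb1 Hb2]] := IH (ltnW HnN).
have hc : ((-1) ^+ lab n.+1 : k) * (-1) ^+ lab n.+1 = 1.
  by case: (lab n.+1); rewrite ?expr0 ?expr1 ?mulr1 ?mulrNN ?mulr1.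
pose s := if n == 0%N then 0%N else indent l n.+1.
have hsq : (s + p n <= p n.+1)%N.
  rewrite /s; case: eqP => [->|n0]; first by rewrite hp0.
  have [_ H] := hpyr; have [] := H n.+1 ltac:(lia).
  rewrite /indent /=; lia.
have [w [Hw1 Hw2]] := rowL (b n) hc hsq (fun r => (-1) ^+ (r * lab n.+1) * a n.+1 r).
exists (fun i => if i == n.+1 then w else b i); split.
  move=> i Hi r Hr; case: eqP => [Ei|Ni].
    subst i; rewrite /= (_ : n == n.+1 = false); last by lia.
    have := Hw1 r Hr; rewrite /s; case: eqP => [n0|//]; exfalso; lia.
  rewrite (_ : i.-1 == n.+1 = false); last by lia.
  apply: Hb1 => //; lia.
move=> i Hi r Hr; case: eqP => [Ei|Ni].
  by subst i; apply: Hw2.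
apply: Hb2 => //; lia.
Qed.

Unset Implicit Arguments.

Theorem mainTheorem9 (k : closedFieldType) (hchar : [pchar k] =i pred0)
  (N : nat) (p l : nat -> nat) (lab : nat -> bool)
  (hpyr : is_pyramid N p l) (hp0 : p 0%N = 0%N)
  (a : nat -> nat -> k) :
  exists b : nat -> nat -> k,
    (forall i, (2 <= i <= N)%N -> forall r, (1 <= r <= p i.-1)%N ->
        b i (indent l i + r)%N = b i.-1 r) /\
    (forall i, (1 <= i <= N)%N -> forall r, (1 <= r <= p i - p i.-1)%N ->
        elem_sym r (p i) (fun j => (-1) ^+ lab i * b i j)
        = (-1) ^+ (r * lab i) * a i r).
Proof. exact: (mainInd lab hpyr hp0 a (leqnn N)). Qed.
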